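(* Let $I=[0,1]$ and $f_{1,\infty}$ an $m$-periodic sequence of continuous self-maps of $I$. If $(I,f_{1,\infty})$ is sensitive, then it is syndetically sensitive, ergodically sensitive, collectively sensitive and multi-sensitive.
   Context: $m$-periodic: $f_{n+m}=f_n$ for all $n$. Write $f_1^n=f_n\circ\cdots\circ f_1$ and, for open $U$ and $\delta>0$, $N_{f_{1,\infty}}(U,\delta)=\{n\in\mathbb{N}:\exists x,y\in U,\ |f_1^n(x)-f_1^n(y)|>\delta\}$. Sensitive: there is $\delta>0$ such that for every $x\in I$ and neighbourhood $U$ of $x$ there are $y\in U$, $n\in\mathbb{N}$ with $|f_1^n(x)-f_1^n(y)|>\delta$. A set $F\subseteq\mathbb{N}$ is syndetic if there is $a\in\mathbb{N}$ with $\{i,\dots,i+a\}\cap F\ne\emptyset$ for all $i$; upper density $\overline{d}(S)=\limsup_{n\to\infty}\frac1n|S\cap\{0,\dots,n-1\}|$. Syndetically (resp. ergodically) sensitive: there is $\delta>0$ with $N_{f_{1,\infty}}(U,\delta)$ syndetic (resp. of positive upper density) for every non-empty open $U$. Multi-sensitive: there is $\delta>0$ such that for every $k$ and non-empty open $V_1,\dots,V_k$, $\bigcap_{i=1}^kN_{f_{1,\infty}}(V_i,\delta)\ne\emptyset$. Collectively sensitive: there is $\delta>0$ such that for any points $x_1,\dots,x_k\in I$ and any $\epsilon>0$ there exist $y_1,\dots,y_k$ with $|x_i-y_i|<\epsilon$, $n\in\mathbb{N}$ and $i_0\in\{1,\dots,k\}$ such that for each $i$, $|f_1^n(x_i)-f_1^n(y_{i_0})|>\delta$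 or $|f_1^n(y_i)-f_1^n(x_{i_0})|>\delta$. *)

(* Defs.v *)
From Stdlib Require Import Reals Lra Lia Classical ClassicalEpsilon.
Open Scope R_scope.

Definition inI (x : R) : Prop := 0 <= x <= 1.

Definition cont_selfmap_I (g : R -> R) : Prop :=
  (forall x, inI x -> inI (g x)) /\
  (forall x, inI x -> forall eps, eps > 0 -> exists d, d > 0 /\
     forall y, inI y -> Rabs (y - x) < d -> Rabs (g y - g x) < eps).

(* A sequence f_1, f_2, ... is encoded as f : nat -> R -> R, using indices n >= 1
   (f 0 is irrelevant). *)
Definition m_periodic (m : nat) (f : nat -> R -> R) : Prop :=
  (1 <= m)%nat /\ forall n x, (1 <= n)%nat -> inI x -> f (n + m)%nat x = f n x.

Fixpoint iter_comp (f : nat -> R -> R) (n : nat) (x : R) : R :=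
  match n with
  | O => x
  | S k => f (S k) (iter_comp f k x)
  end.

Definition open_in_I (U : R -> Prop) : Prop :=
  (forall x, U x -> inI x) /\
  (forall x, U x -> exists r, r > 0 /\ forall y, inI y -> Rabs (y - x) < r -> U y).

Definition nonempty (U : R -> Prop) : Prop := exists x, U x.

Definition nbhd_in_I (x : R) (U : R -> Prop) : Prop :=
  exists r, r > 0 /\ forall y, inI y -> Rabs (y - x) < r -> U y.

Definition Nset (f : nat -> R -> R) (U : R -> Prop) (delta : R) (n : nat) : Prop :=
  (1 <= n)%nat /\ exists x y, U x /\ U y /\
     Rabs (iter_comp f n x - iter_comp f n y) > delta.

Definition sensitive (f : nat -> R -> R) : Prop :=
  exists delta, delta > 0 /\
    forall x U, inI x -> nbhd_in_I x U ->
      exists y n, inI y /\ U y /\ (1 <= n)%nat /\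
        Rabs (iter_comp f n x - iter_comp f n y) > delta.

Definition syndetic (F : nat -> Prop) : Prop :=
  exists a : nat, forall i : nat, exists j, (i <= j <= i + a)%nat /\ F j.

Fixpoint count_below (S : nat -> Prop) (n : nat) : nat :=
  match n with
  | O => O
  | S k => (count_below S k +
            (if excluded_middle_informative (S k) then 1 else 0))%nat
  end.

(* upper density limsup_{n->oo} |S ∩ {0..n-1}| / n is > 0; since the ratios lie
   in [0,1], this is: exists c > 0 with ratio > c for infinitely many n. *)
Definition positive_upper_density (S : nat -> Prop) : Prop :=
  exists c, c > 0 /\ forall N : nat, exists n : nat,
    (N <= n)%nat /\ (1 <= n)%nat /\ INR (count_below S n) / INR n > c.

Definition syndetically_sensitive (f : nat -> R -> R) : Prop :=
  exists delta, delta > 0 /\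
    forall U, open_in_I U -> nonempty U -> syndetic (Nset f U delta).

Definition ergodically_sensitive (f : nat -> R -> R) : Prop :=
  exists delta, delta > 0 /\
    forall U, open_in_I U -> nonempty U -> positive_upper_density (Nset f U delta).

Definition multi_sensitive (f : nat -> R -> R) : Prop :=
  exists delta, delta > 0 /\
    forall (k : nat) (V : nat -> R -> Prop),
      (forall i, (i < k)%nat -> open_in_I (V i) /\ nonempty (V i)) ->
      exists n, forall i, (i < k)%nat -> Nset f (V i) delta n.

Definition collectively_sensitive (f : nat -> R -> R) : Prop :=
  exists delta, delta > 0 /\
    forall (k : nat) (x : nat -> R) (eps : R), (1 <= k)%nat ->
      (forall i, (i < k)%nat -> inI (x i)) -> eps > 0 ->
      exists (y : nat -> R) (n i0 : nat),
        (forall i, (i < k)%nat -> inI (y i) /\ Rabs (x i - y i) < eps) /\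
        (1 <= n)%nat /\ (i0 < k)%nat /\
        forall i, (i < k)%nat ->
          Rabs (iter_comp f n (x i) - iter_comp f n (y i0)) > delta \/
          Rabs (iter_comp f n (y i) - iter_comp f n (x i0)) > delta.

(* Main.v *)
Require Import Defs.
From Stdlib Require Import Reals Lra Lia ZArith Classical ClassicalEpsilon.
Open Scope R_scope.

Lemma cont_id : cont_selfmap_I (fun x => x).
Proof.
  split; [auto|]. intros x _ eps He. exists eps; split; auto.
Qed.

Lemma cont_comp g h : cont_selfmap_I g -> cont_selfmap_I h ->
  cont_selfmap_I (fun x => g (h x)).
Proof.
  intros [Hg1 Hg2] [Hh1 Hh2]; split; [auto|].
  intros x Hx eps He.
  destruct (Hg2 (h x) (Hh1 x Hx) eps He) as [d1 [Hd1 H1]].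
  destruct (Hh2 x Hx d1 Hd1) as [d2 [Hd2 H2]].
  exists d2; split; auto.
Qed.

Definition HypF (m : nat) (f : nat -> R -> R) :=
  m_periodic m f /\ (forall n, (1 <= n)%nat -> cont_selfmap_I (f n)).

Lemma iter_cont m f n : HypF m f -> cont_selfmap_I (iter_comp f n).
Proof.
  intros [_ Hc]. induction n.
  - apply cont_id.
  - change (cont_selfmap_I (fun x => f (S n) (iter_comp f n x))).
    apply cont_comp; auto. apply Hc; lia.
Qed.

Lemma iter_in m f n x : HypF m f -> inI x -> inI (iter_comp f n x).
Proof. intros H Hx. apply (proj1 (iter_cont m f n H)); auto. Qed.

Fixpoint iter_from (f : nat -> R -> R) (s n : nat) (x : R) : R :=
  match n with
  | O => x
  | S k => f (s + S k)%nat (iter_from f s k x)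
  end.

Lemma iter_split f a b x : iter_comp f (a + b) x = iter_from f a b (iter_comp f a x).
Proof.
  induction b; simpl.
  - rewrite Nat.add_0_r; auto.
  - rewrite <- IHb. replace (a + S b)%nat with (S (a + b)) by lia. reflexivity.
Qed.

Lemma iter_from_in m f s n x : HypF m f -> inI x -> inI (iter_from f s n x).
Proof.
  intros [_ Hc] Hx. induction n; simpl; auto.
  apply (proj1 (Hc (s + S n)%nat ltac:(lia))); auto.
Qed.

Lemma iter_from_per m f s n x : HypF m f -> inI x ->
  iter_from f (s + m) n x = iter_from f s n x.
Proof.
  intros H Hx. induction n; simpl; auto.
  rewrite IHn. destruct H as [[Hm Hp] Hc].
  replace (s + m + S n)%nat with (s + S n + m)%nat by lia.
  apply Hp; [lia|]. apply (iter_from_in m f s n x); auto. split; [split|]; auto.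
Qed.

Lemma iter_from_km m f k n x : HypF m f -> inI x ->
  iter_from f (k * m) n x = iter_comp f n x.
Proof.
  intros H Hx. induction k.
  - simpl. clear H Hx. induction n; simpl; auto. rewrite IHn; auto.
  - replace (S k * m)%nat with (k * m + m)%nat by lia.
    rewrite iter_from_per; auto.
Qed.

Lemma L_split m f k r x : HypF m f -> inI x ->
  iter_comp f (k * m + r) x = iter_comp f r (iter_comp f (k * m) x).
Proof.
  intros H Hx. rewrite iter_split. apply iter_from_km; auto. eapply iter_in; eauto.
Qed.

Lemma L_const f a b x y : iter_comp f a x = iter_comp f a y ->
  iter_comp f (a + b) x = iter_comp f (a + b) y.
Proof. intros E. rewrite !iter_split, E. auto. Qed.

Definition clamp (t : R) : R := Rmax 0 (Rmin 1 t).

Lemma clamp_in t : inI (clamp t).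
Proof. unfold clamp, inI, Rmax, Rmin. repeat destruct Rle_dec; lra. Qed.

Lemma clamp_id t : inI t -> clamp t = t.
Proof. unfold clamp, inI, Rmax, Rmin. intros. repeat destruct Rle_dec; lra. Qed.

Lemma clamp_lip s t : Rabs (clamp s - clamp t) <= Rabs (s - t).
Proof.
  unfold clamp, Rmax, Rmin. repeat destruct Rle_dec; unfold Rabs;
  repeat destruct Rcase_abs; lra.
Qed.

Lemma cont_ext h : cont_selfmap_I h -> continuity (fun t => h (clamp t)).
Proof.
  intros [_ Hc] x. unfold continuity_pt, continue_in, limit1_in, limit_in.
  intros eps He. simpl. unfold R_dist.
  destruct (Hc (clamp x) (clamp_in x) eps He) as [d [Hd H]].
  exists d; split; auto. intros y [_ Hy].
  apply H. apply clamp_in. pose proof (clamp_lip y x). lra.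
Qed.

Lemma UC h : cont_selfmap_I h -> forall eps, eps > 0 -> exists d, d > 0 /\
  forall x y, inI x -> inI y -> Rabs (x - y) < d -> Rabs (h x - h y) < eps.
Proof.
  intros Hh eps He.
  destruct (@Heine_cor2 (fun t => h (clamp t)) 0 1 (fun x (_ : 0 <= x <= 1) => cont_ext h Hh x)
     (mkposreal eps He)) as [[d Hd] H].
  exists d; split; auto. intros x y Hx Hy Hxy.
  specialize (H x y Hx Hy Hxy). simpl in H. rewrite !clamp_id in H; auto.
Qed.

Lemma pullback h a b z : cont_selfmap_I h -> inI a -> inI b ->
  Rmin (h a) (h b) <= z <= Rmax (h a) (h b) ->
  exists w, Rmin a b <= w <= Rmax a b /\ h w = z.
Proof.
  intros Hh Ha Hb Hz.
  assert (G: forall a b, inI a -> inI b -> a <= b ->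
     Rmin (h a) (h b) <= z <= Rmax (h a) (h b) ->
     exists w, a <= w <= b /\ h w = z).
  { clear a b Ha Hb Hz. intros a b Ha Hb Hab Hz.
    destruct (IVT_cor (fun t => h (clamp t) - z) a b
      (continuity_minus _ _ (cont_ext h Hh) (continuity_const (fun _ => z) (fun _ _ => eq_refl)))
      Hab) as [w [Hw E]].
    - rewrite !clamp_id; auto. unfold Rmin, Rmax in Hz.
      destruct Rle_dec in Hz; destruct Hz as [Hz1 Hz2].
      +
        assert (0 <= h b - z) by lra. assert (h a - z <= 0) by lra. nra.
      + assert (h b - z <= 0) by lra. assert (0 <= h a - z) by lra. nra.
    - exists w; split; auto. rewrite clamp_id in E.
      + lra.
      + unfold inI in *; lra. }
  destruct (Rle_dec a b).
  - rewrite Rmin_left, Rmax_right by auto. apply G; auto.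
  - rewrite Rmin_right, Rmax_left by lra. apply G; auto; try lra.
    rewrite Rmin_comm, Rmax_comm; auto.
Qed.

Lemma grid c u v : c > 0 -> 0 <= u -> v <= 1 -> u + 2 * c <= v ->
  exists j : nat, (INR j + 1) * c <= 1 /\ u <= INR j * c /\ (INR j + 1) * c <= v.
Proof.
  intros Hc Hu Hv Huv.
  destruct (archimed (u / c)) as [A1 A2].
  assert (Hpos: (0 <= up (u / c))%Z).
  { apply le_IZR. assert (0 <= u / c) by (unfold Rdiv; apply Rmult_le_pos; [lra| left; apply Rinv_0_lt_compat; lra]). lra. }
  exists (Z.to_nat (up (u / c))).
  rewrite INR_IZR_INZ, Z2Nat.id by auto.
  assert (E1: u <= IZR (up (u / c)) * c).
  { apply Rmult_gt_compat_r with (r := c) in A1; auto.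
    unfold Rdiv in A1. rewrite Rmult_assoc, Rinv_l, Rmult_1_r in A1; lra. }
  assert (E2: IZR (up (u / c)) * c <= u + c).
  { assert (IZR (up (u / c)) <= u / c + 1) by lra.
    apply Rmult_le_compat_r with (r := c) in H; [|lra].
    unfold Rdiv in H. rewrite Rmult_plus_distr_r, Rmult_assoc, Rinv_l, Rmult_1_r in H; lra. }
  split; [|split]; lra.
Qed.

Lemma finite_max (M : nat) (P : nat -> nat -> Prop) :
  (forall i n n', P i n -> (n <= n')%nat -> P i n') ->
  (forall i, (i < M)%nat -> exists n, P i n) ->
  exists N, forall i, (i < M)%nat -> P i N.
Proof.
  intros Hmon H. induction M.
  - exists O. intros; lia.
  - destruct IHM as [N1 HN1]. { intros; apply H; lia. }
    destruct (H M ltac:(lia)) as [n2 Hn2].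
    exists (Nat.max N1 n2). intros i Hi.
    destruct (Nat.eq_dec i M).
    + subst. eapply Hmon; eauto; lia.
    + eapply Hmon; [apply HN1; lia| lia].
Qed.

Lemma finite_min (M : nat) (P : nat -> R -> Prop) :
  (forall i e e', P i e -> 0 < e' <= e -> P i e') ->
  (forall i, (i < M)%nat -> exists e, e > 0 /\ P i e) ->
  exists e, e > 0 /\ forall i, (i < M)%nat -> P i e.
Proof.
  intros Hmon H. induction M.
  - exists 1. split; [lra|]. intros; lia.
  - destruct IHM as [e1 [He1 HN1]]. { intros; apply H; lia. }
    destruct (H M ltac:(lia)) as [e2 [He2 Hn2]].
    exists (Rmin e1 e2). split. { apply Rmin_glb_lt; auto. }
    intros i Hi.
    destruct (Nat.eq_dec i M).
    + subst. eapply Hmon; eauto. split; [apply Rmin_glb_lt; auto| apply Rmin_r].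
    + eapply Hmon; [apply HN1; lia| split; [apply Rmin_glb_lt; auto| apply Rmin_l]].
Qed.

Lemma grid_bound c : c > 0 -> exists M : nat, forall j : nat,
  (INR j + 1) * c <= 1 -> (j < M)%nat.
Proof.
  intros Hc. destruct (archimed (1 / c)) as [A1 _].
  assert (Hpos: (0 <= up (1 / c))%Z).
  { apply le_IZR. assert (0 <= 1 / c) by (unfold Rdiv; apply Rmult_le_pos; [lra| left; apply Rinv_0_lt_compat; lra]). lra. }
  exists (Z.to_nat (up (1 / c))). intros j Hj.
  apply INR_lt. rewrite (INR_IZR_INZ (Z.to_nat _)), Z2Nat.id by auto.
  assert (INR j * c < 1) by lra.
  assert (INR j < 1 / c).
  { apply Rmult_lt_reg_r with c; auto. unfold Rdiv. rewrite Rmult_assoc, Rinv_l; lra. }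
  lra.
Qed.

Lemma transfer h c p q x0 y0 : cont_selfmap_I h -> c > 0 -> 0 <= p -> q <= 1 ->
  p <= x0 <= q -> p <= y0 <= q -> Rabs (h x0 - h y0) >= 2 * c ->
  exists j : nat, (INR j + 1) * c <= 1 /\
    forall z, INR j * c <= z <= (INR j + 1) * c -> exists w, p <= w <= q /\ h w = z.
Proof.
  intros Hh Hc Hp Hq Hx Hy Hd.
  assert (Ix: inI x0) by (unfold inI; lra). assert (Iy: inI y0) by (unfold inI; lra).
  pose proof (proj1 Hh x0 Ix) as Hx'. pose proof (proj1 Hh y0 Iy) as Hy'.
  unfold inI in Hx', Hy'.
  destruct (grid c (Rmin (h x0) (h y0)) (Rmax (h x0) (h y0))) as [j [J1 [J2 J3]]]; auto.
  - unfold Rmin; destruct Rle_dec; lra.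
  - unfold Rmax; destruct Rle_dec; lra.
  - unfold Rmin, Rmax; destruct Rle_dec; unfold Rabs in Hd; destruct Rcase_abs in Hd; lra.
  - exists j; split; auto. intros z Hz.
    destruct (pullback h x0 y0 z Hh Ix Iy) as [w [Hw E]]; [lra|].
    exists w; split; auto. unfold Rmin, Rmax in Hw; destruct Rle_dec in Hw; lra.
Qed.

Lemma gsens m f : HypF m f -> sensitive f ->
  exists rho, 0 < rho <= 1 /\ forall p q, 0 <= p -> p < q -> q <= 1 ->
    exists k x y, p <= x <= q /\ p <= y <= q /\
      Rabs (iter_comp f (k * m) x - iter_comp f (k * m) y) >= rho.
Proof.
  intros H [delta [Hdel Hs]].
  assert (Hm: (1 <= m)%nat) by (destruct H as [[Hm _] _]; auto).
  destruct (finite_min m (fun r e => forall x y, inI x -> inI y -> Rabs (x - y) < e ->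
       Rabs (iter_comp f r x - iter_comp f r y) < delta)) as [r0 [Hr0 HU]].
  { intros i e e' Hi He' x y Hx Hy Hxy. apply Hi; auto; lra. }
  { intros i _. apply UC; auto. eapply iter_cont; eauto. }
  exists (Rmin r0 1). split; [split; [apply Rmin_glb_lt; lra| apply Rmin_r]|].
  intros p q Hp Hpq Hq.
  set (x := (p + q) / 2).
  destruct (Hs x (fun y => p <= y <= q)) as [y [n [Iy [Uy [Hn Hxy]]]]].
  { unfold inI, x; lra. }
  { exists ((q - p) / 2). split; [lra|]. intros y _ Hy. unfold x in Hy.
    unfold Rabs in Hy; destruct Rcase_abs in Hy; lra. }
  pose proof (Nat.div_mod n m ltac:(lia)) as Dn.
  pose proof (Nat.mod_upper_bound n m ltac:(lia)) as Mn.
  exists (n / m)%nat, x, y. split; [unfold x; lra|]. split; auto.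
  apply Rnot_lt_ge. intros Hlt.
  assert (Ix: inI x) by (unfold inI, x; lra).
  assert (Hr := HU (n mod m)%nat Mn (iter_comp f (n / m * m) x) (iter_comp f (n / m * m) y)
     (iter_in m f _ x H Ix) (iter_in m f _ y H Iy)).
  assert (Hlt2: Rabs (iter_comp f (n / m * m) x - iter_comp f (n / m * m) y) < r0).
  { pose proof (Rmin_l r0 1). lra. }
  specialize (Hr Hlt2).
  rewrite <- !L_split in Hr; auto.
  replace (n / m * m + n mod m)%nat with n in Hr by lia. lra.
Qed.

Definition sep (f : nat -> R -> R) (m t : nat) (p q e : R) : Prop :=
  exists x y, p <= x <= q /\ p <= y <= q /\
    Rabs (iter_comp f (t * m) x - iter_comp f (t * m) y) >= e.

Definition GSENS (f : nat -> R -> R) (m : nat) (rho : R) : Prop :=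
  forall p q, 0 <= p -> p < q -> q <= 1 ->
    exists k x y, p <= x <= q /\ p <= y <= q /\
      Rabs (iter_comp f (k * m) x - iter_comp f (k * m) y) >= rho.

Lemma sep_mon f m t p q e e' : sep f m t p q e -> e' <= e -> sep f m t p q e'.
Proof. intros [x [y [A [B C]]]] L. exists x, y. repeat split; try lra. Qed.

Lemma valid_in c j : c > 0 -> (INR j + 1) * c <= 1 ->
  0 <= INR j * c /\ INR j * c < (INR j + 1) * c.
Proof. intros Hc Hj. pose proof (pos_INR j). split; nra. Qed.

Lemma step3a m f rho : HypF m f -> 0 < rho <= 1 -> GSENS f m rho ->
  exists N, forall j, (INR j + 1) * (rho / 2) <= 1 ->
    exists k, (1 <= k <= N)%nat /\ sep f m k (INR j * (rho/2)) ((INR j + 1) * (rho / 2)) rho.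
Proof.
  intros H Hr Hg.
  destruct (grid_bound (rho / 2)) as [M HM]; [lra|].
  destruct (finite_max M (fun j n => (INR j + 1) * (rho / 2) <= 1 ->
     exists k, (1 <= k <= n)%nat /\ sep f m k (INR j * (rho/2)) ((INR j + 1) * (rho / 2)) rho))
    as [N HN].
  - intros i n n' Hi Hn Hv. destruct (Hi Hv) as [k [Hk S]]. exists k; split; auto; lia.
  - intros j _.
    destruct (classic ((INR j + 1) * (rho / 2) <= 1)) as [Hv|Hv].
    + destruct (valid_in (rho/2) j ltac:(lra) Hv) as [V1 V2].
      destruct (Hg _ _ V1 V2 Hv) as [k [x [y [Hx [Hy Hd]]]]].
      exists k. intros _. exists k. split; [|exists x, y; auto].
      split; [|lia]. destruct k; [|lia].
      simpl in Hd. exfalso. unfold Rabs in Hd; destruct Rcase_abs in Hd; nra.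
    + exists O. intros; contradiction.
  - exists N. intros j Hj. apply HN; auto.
Qed.

Lemma step3c m f rho N : HypF m f -> 0 < rho <= 1 ->
  exists eta, 0 < eta <= rho /\ forall j t, (INR j + 1) * (rho / 2) <= 1 -> (t <= N)%nat ->
    (exists k, (t <= k)%nat /\ sep f m k (INR j * (rho/2)) ((INR j + 1) * (rho / 2)) rho) ->
    sep f m t (INR j * (rho/2)) ((INR j + 1) * (rho / 2)) eta.
Proof.
  intros H Hr.
  destruct (grid_bound (rho / 2)) as [M HM]; [lra|].
  destruct (finite_min M (fun j e => forall t, (INR j + 1) * (rho / 2) <= 1 -> (t <= N)%nat ->
    (exists k, (t <= k)%nat /\ sep f m k (INR j * (rho/2)) ((INR j + 1) * (rho / 2)) rho) ->
    sep f m t (INR j * (rho/2)) ((INR j + 1) * (rho / 2)) e)) as [e [He Hall]].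
  - intros i e e' Hi He' t A B C. eapply sep_mon; [apply Hi; auto| lra].
  - intros j _.
    destruct (finite_min (S N) (fun t e => (INR j + 1) * (rho / 2) <= 1 -> (t <= N)%nat ->
    (exists k, (t <= k)%nat /\ sep f m k (INR j * (rho/2)) ((INR j + 1) * (rho / 2)) rho) ->
    sep f m t (INR j * (rho/2)) ((INR j + 1) * (rho / 2)) e)) as [e [He Hall]].
    + intros i e e' Hi He' A B C. eapply sep_mon; [apply Hi; auto| lra].
    + intros t _.
      destruct (classic (exists k, (t <= k)%nat /\
          sep f m k (INR j * (rho/2)) ((INR j + 1) * (rho / 2)) rho)) as [[k [Htk [x [y [Hx [Hy Hd]]]]]]|Hn].
      * exists (Rabs (iter_comp f (t * m) x - iter_comp f (t * m) y)).
        split.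
        -- apply Rabs_pos_lt. intro E. apply Rminus_diag_uniq in E.
           apply (L_const f _ ((k - t) * m)) in E.
           replace (t * m + (k - t) * m)%nat with (k * m)%nat in E by nia.
           rewrite E, Rminus_diag, Rabs_R0 in Hd. lra.
        -- intros _ _ _. exists x, y. repeat split; try lra.
      * exists 1. split; [lra|]. intros _ _ C. contradiction.
    + exists e. split; auto. intros t A B C. apply Hall; auto. lia.
  - exists (Rmin e rho). split; [split; [apply Rmin_glb_lt; lra| apply Rmin_r]|].
    intros j t A B C. eapply sep_mon; [apply Hall; auto| apply Rmin_l].
Qed.

Lemma pull_sep m f k t p q c e : HypF m f -> c > 0 -> 0 <= p -> q <= 1 ->
  (exists x y, p <= x <= q /\ p <= y <= q /\
      Rabs (iter_comp f (k * m) x - iter_comp f (k * m) y) >= 2 * c) ->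
  (forall j, (INR j + 1) * c <= 1 -> sep f m t (INR j * c) ((INR j + 1) * c) e) ->
  sep f m (k + t) p q e.
Proof.
  intros H Hc Hp Hq [x0 [y0 [Hx [Hy Hd]]]] Hall.
  destruct (transfer (iter_comp f (k * m)) c p q x0 y0 (iter_cont m f _ H) Hc Hp Hq Hx Hy Hd)
    as [j [Hj Hpb]].
  destruct (Hall j Hj) as [x2 [y2 [Hx2 [Hy2 Hd2]]]].
  destruct (Hpb x2 Hx2) as [w1 [Hw1 E1]]. destruct (Hpb y2 Hy2) as [w2 [Hw2 E2]].
  exists w1, w2. split; auto. split; auto.
  replace ((k + t) * m)%nat with (k * m + t * m)%nat by nia.
  rewrite !L_split; auto; try (unfold inI; lra). rewrite E1, E2. auto.
Qed.

Lemma step3d m f rho : HypF m f -> 0 < rho <= 1 -> GSENS f m rho ->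
  exists eta, 0 < eta <= rho /\ forall t j, (INR j + 1) * (rho / 2) <= 1 ->
    sep f m t (INR j * (rho/2)) ((INR j + 1) * (rho / 2)) eta.
Proof.
  intros H Hr Hg.
  destruct (step3a m f rho H Hr Hg) as [N HN].
  destruct (step3c m f rho N H Hr) as [eta [He Hc]].
  exists eta. split; auto.
  intros t. induction t as [t IH] using lt_wf_ind. intros j Hj.
  destruct (HN j Hj) as [k [Hk Sk]].
  destruct (le_lt_dec t k) as [Htk|Htk].
  - apply Hc; auto; [lia|]. exists k; auto.
  - replace t with (k + (t - k))%nat by lia.
    destruct (valid_in (rho/2) j ltac:(lra) Hj) as [V1 V2].
    apply (pull_sep m f k (t - k) _ _ (rho / 2)); auto; try lra.
    + destruct Sk as [x [y [A [B C]]]]. exists x, y. repeat split; try lra.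
    + intros j2 Hj2. apply IH; auto. lia.
Qed.

Lemma core m f : HypF m f -> sensitive f ->
  exists th, th > 0 /\ forall p q, 0 <= p -> p < q -> q <= 1 ->
    exists n0, (1 <= n0)%nat /\ forall n, (n0 <= n)%nat ->
      exists x y, p <= x <= q /\ p <= y <= q /\
        Rabs (iter_comp f n x - iter_comp f n y) > th.
Proof.
  intros H Hs.
  assert (Hm: (1 <= m)%nat) by (destruct H as [[Hm _] _]; auto).
  destruct (gsens m f H Hs) as [rho [Hr Hg]].
  destruct (step3d m f rho H Hr Hg) as [eta [He Hsep]].
  set (c2 := eta / 2).
  destruct (grid_bound c2) as [M2 HM2]; [unfold c2; lra|].
  destruct (finite_min M2 (fun j e => (INR j + 1) * c2 <= 1 -> forall r, (r < m)%nat ->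
     exists x y, INR j * c2 <= x <= (INR j + 1) * c2 /\ INR j * c2 <= y <= (INR j + 1) * c2 /\
       Rabs (iter_comp f r x - iter_comp f r y) >= e)) as [th [Hth Hall]].
  { intros i e e' Hi He' A r Hr'. destruct (Hi A r Hr') as [x [y [P1 [P2 P3]]]].
    exists x, y. repeat split; try lra. }
  { intros j _.
    destruct (classic ((INR j + 1) * c2 <= 1)) as [Hv|Hv]; [|exists 1; split; [lra|]; intros; contradiction].
    destruct (finite_min m (fun r e => (r < m)%nat ->
     exists x y, INR j * c2 <= x <= (INR j + 1) * c2 /\ INR j * c2 <= y <= (INR j + 1) * c2 /\
       Rabs (iter_comp f r x - iter_comp f r y) >= e)) as [e [He2 Hall]].
    - intros i e e' Hi He' A. destruct (Hi A) as [x [y [P1 [P2 P3]]]].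
      exists x, y. repeat split; try lra.
    - intros r Hr'.
      destruct (valid_in c2 j ltac:(unfold c2; lra) Hv) as [V1 V2].
      destruct (Hg _ _ V1 V2 Hv) as [k [x [y [Hx [Hy Hd]]]]].
      destruct k.
      { exfalso. simpl in Hd. unfold c2 in *. unfold Rabs in Hd; destruct Rcase_abs in Hd; nra. }
      exists (Rabs (iter_comp f r x - iter_comp f r y)). split.
      + apply Rabs_pos_lt. intro E. apply Rminus_diag_uniq in E.
        apply (L_const f _ (S k * m - r)) in E.
        replace (r + (S k * m - r))%nat with (S k * m)%nat in E by nia.
        rewrite E, Rminus_diag, Rabs_R0 in Hd. lra.
      + intros _. exists x, y. repeat split; lra.
    - exists e. split; auto. }
  exists (th / 2). split; [lra|].
  intros p q Hp Hpq Hq.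
  destruct (Hg p q Hp Hpq Hq) as [k1 [x1 [y1 [Hx1 [Hy1 Hd1]]]]].
  exists (Nat.max 1 (k1 * m)). split; [lia|]. intros n Hn.
  pose proof (Nat.div_mod n m ltac:(lia)) as Dn.
  pose proof (Nat.mod_upper_bound n m ltac:(lia)) as Mn.
  set (k := (n / m)%nat) in *. set (r := (n mod m)%nat) in *.
  assert (Hk: (k1 <= k)%nat) by nia.
  assert (S1: sep f m (k1 + (k - k1)) p q eta).
  { apply (pull_sep m f k1 (k - k1) p q (rho / 2)); auto; try lra.
    all: try (exists x1, y1; repeat split; lra).
    all: try (intros j Hj; apply Hsep; auto). }
  replace (k1 + (k - k1))%nat with k in S1 by lia.
  destruct S1 as [x0 [y0 [Hx0 [Hy0 Hd0]]]].
  destruct (transfer (iter_comp f (k * m)) c2 p q x0 y0 (iter_cont m f _ H))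
    as [j [Hj Hpb]]; auto; try (unfold c2; lra).
  destruct (Hall j (HM2 j Hj) Hj r Mn) as [x2 [y2 [Hx2 [Hy2 Hd2]]]].
  destruct (Hpb x2 Hx2) as [w1 [Hw1 E1]]. destruct (Hpb y2 Hy2) as [w2 [Hw2 E2]].
  exists w1, w2. split; auto. split; auto.
  replace n with (k * m + r)%nat by lia.
  rewrite !L_split; auto; try (unfold inI; lra). rewrite E1, E2. lra.
Qed.

Lemma open_interval U : open_in_I U -> nonempty U ->
  exists p q, 0 <= p /\ p < q /\ q <= 1 /\ forall y, p <= y <= q -> U y.
Proof.
  intros [HI Ho] [x Hx].
  destruct (Ho x Hx) as [r [Hr Hb]]. pose proof (HI x Hx) as Ix. unfold inI in Ix.
  set (s := Rmin (r / 2) (1 / 2)).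
  assert (Hs: 0 < s <= r / 2 /\ s <= 1/2).
  { unfold s. split; [split|]; [apply Rmin_glb_lt; lra| apply Rmin_l| apply Rmin_r]. }
  destruct (Rle_dec x (1/2)).
  - exists x, (x + s). repeat split; try lra. intros y Hy. apply Hb.
    + unfold inI; lra.
    + unfold Rabs; destruct Rcase_abs; lra.
  - exists (x - s), x. repeat split; try lra. intros y Hy. apply Hb.
    + unfold inI; lra.
    + unfold Rabs; destruct Rcase_abs; lra.
Qed.

Lemma cof m f : HypF m f -> sensitive f ->
  exists th, th > 0 /\ forall U, open_in_I U -> nonempty U ->
    exists n0, (1 <= n0)%nat /\ forall n, (n0 <= n)%nat -> Nset f U th n.
Proof.
  intros H Hs. destruct (core m f H Hs) as [th [Hth Hc]].
  exists th. split; auto. intros U Ho Hn.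
  destruct (open_interval U Ho Hn) as [p [q [Hp [Hpq [Hq HU]]]]].
  destruct (Hc p q Hp Hpq Hq) as [n0 [Hn0 Hall]].
  exists n0. split; auto. intros n Hn'. split; [lia|].
  destruct (Hall n Hn') as [x [y [Hx [Hy Hd]]]]. exists x, y. auto.
Qed.

Lemma count_ge (P : nat -> Prop) n0 : (forall j, (n0 <= j)%nat -> P j) ->
  forall n, (n - n0 <= count_below P n)%nat.
Proof.
  intros HS n. induction n; cbn [count_below]; [lia|].
  destruct excluded_middle_informative as [A|A].
  - lia.
  - assert (n < n0)%nat. { destruct (le_lt_dec n0 n); auto. exfalso; apply A, HS; auto. }
    lia.
Qed.

Theorem theorem4p3 (m : nat) (f : nat -> R -> R) :
  m_periodic m f ->
  (forall n, (1 <= n)%nat -> cont_selfmap_I (f n)) ->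
  sensitive f ->
  syndetically_sensitive f /\ ergodically_sensitive f /\
  collectively_sensitive f /\ multi_sensitive f.
Proof.
  intros Hp Hc Hs.
  assert (H : HypF m f) by (split; auto).
  destruct (cof m f H Hs) as [th [Hth Hcof]].
  split; [|split; [|split]].
  - exists th. split; auto. intros U Ho Hn.
    destruct (Hcof U Ho Hn) as [n0 [Hn0 Hall]].
    exists n0. intros i. exists (i + n0)%nat. split; [lia|]. apply Hall; lia.
  - exists th. split; auto. intros U Ho Hn.
    destruct (Hcof U Ho Hn) as [n0 [Hn0 Hall]].
    exists (1/2). split; [lra|]. intros N.
    exists (Nat.max N (2 * n0 + 1)). split; [lia|]. split; [lia|].
    set (n := Nat.max N (2 * n0 + 1)).
    pose proof (count_ge (Nset f U th) n0 Hall n) as Hcnt.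
    apply le_INR in Hcnt. rewrite minus_INR in Hcnt by lia.
    assert (Hn2: (2 * n0 + 1 <= n)%nat) by lia. apply le_INR in Hn2.
    rewrite plus_INR, mult_INR in Hn2. simpl in Hn2.
    pose proof (pos_INR n0). assert (Hnpos: 0 < INR n) by lra.
    apply Rmult_gt_reg_r with (INR n); auto. unfold Rdiv.
    rewrite Rmult_assoc, Rinv_l by lra. lra.
  - exists (th / 2). split; [lra|].
    intros k x eps Hk Hx Heps.
    set (U := fun i y => inI y /\ Rabs (y - x i) < eps).
    assert (HU: forall i, (i < k)%nat -> open_in_I (U i) /\ nonempty (U i)).
    { intros i Hi. split; [split|].
      - intros y [A _]; auto.
      - intros y [A B]. exists (eps - Rabs (y - x i)). split; [lra|].
        intros z Iz Hz. split; auto.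
        pose proof (Rabs_triang (z - y) (y - x i)).
        replace (z - y + (y - x i)) with (z - x i) in H0 by ring. lra.
      - exists (x i). split; auto. rewrite Rminus_diag, Rabs_R0; lra. }
    destruct (finite_max k (fun i n => (i < k)%nat -> forall n', (n <= n')%nat -> Nset f (U i) th n'))
      as [N HN].
    { intros i n n' A B C n'' D. apply A; auto; lia. }
    { intros i Hi. destruct (HU i Hi) as [A B]. destruct (Hcof _ A B) as [n0 [_ Hall]].
      exists n0. intros _. auto. }
    assert (Hy: forall i, exists y, (i < k)%nat -> U i y /\
        Rabs (iter_comp f N y - iter_comp f N (x O)) > th / 2).
    { intros i. destruct (le_lt_dec k i) as [Hi|Hi].
      - exists 0. intros; lia.
      - destruct (HN i Hi Hi N (le_n _)) as [_ [a [b [Ua [Ub Hab]]]]].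
        destruct (Rlt_dec (th / 2) (Rabs (iter_comp f N a - iter_comp f N (x O)))) as [Ha|Ha].
        + exists a. intros _. split; auto; lra.
        + exists b. intros _. split; auto.
          pose proof (Rabs_triang (iter_comp f N a - iter_comp f N (x O))
                                  (iter_comp f N (x O) - iter_comp f N b)).
          replace (iter_comp f N a - iter_comp f N (x O) + (iter_comp f N (x O) - iter_comp f N b))
            with (iter_comp f N a - iter_comp f N b) in H0 by ring.
          rewrite (Rabs_minus_sym (iter_comp f N (x O))) in H0. lra. }
    exists (fun i => proj1_sig (constructive_indefinite_description _ (Hy i))), N, O.
    split; [|split; [|split]].
    + intros i Hi. destruct (constructive_indefinite_description _ (Hy i)) as [y Py]; simpl.
      destruct (Py Hi) as [[A B] _]. split; auto. rewrite Rabs_minus_sym; auto.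
    + destruct (HN O ltac:(lia) ltac:(lia) N (le_n _)) as [A _]. auto.
    + lia.
    + intros i Hi. right. destruct (constructive_indefinite_description _ (Hy i)) as [y Py]; simpl.
      apply (Py Hi).
  - exists th. split; auto. intros k V HV.
    destruct (finite_max k (fun i n => (i < k)%nat -> forall n', (n <= n')%nat -> Nset f (V i) th n'))
      as [N HN].
    { intros i n n' A B C n'' D. apply A; auto; lia. }
    { intros i Hi. destruct (HV i Hi) as [A B]. destruct (Hcof _ A B) as [n0 [_ Hall]].
      exists n0. intros _. auto. }
    exists N. intros i Hi. apply (HN i Hi Hi N). lia.
Qed.
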